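(* Let $\mathcal M$ be a non-empty compact, locally connected Hausdorff space and $\vec\varphi=(\varphi_1,\dots,\varphi_k):\mathcal M\to\mathbb R^k$ a continuous function. Let $(\vec l,\vec b)$ be an admissible pair, i.e. $\vec l=(l_1,\dots,l_k)$ is a Euclidean unit vector with all $l_i>0$ and $\vec b=(b_1,\dots,b_k)$ satisfies $\sum_i b_i=0$. Define $F^{\vec\varphi}_{(\vec l,\vec b)}:\mathcal M\to\mathbb R$ by $F^{\vec\varphi}_{(\vec l,\vec b)}(P)=\max_{i=1,\dots,k}\frac{\varphi_i(P)-b_i}{l_i}$. Then for all $s,t\in\mathbb R$ with $s<t$, setting $\vec x=s\vec l+\vec b$ and $\vec y=t\vec l+\vec b$, we have $$\ell_{(\mathcal M,\vec\varphi)}(\vec x,\vec y)=\ell_{(\mathcal M,F^{\vec\varphi}_{(\vec l,\vec b)})}(s,t).$$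
   Context: For $\vec x,\vec y\in\mathbb R^k$ write $\vec x\preceq\vec y$ if $x_i\le y_i$ for all $i$, and $\vec x\prec\vec y$ if $x_i<y_i$ for all $i$. For a continuous $\vec\varphi:\mathcal M\to\mathbb R^k$ and $\vec t\in\mathbb R^k$, let $\mathcal M\langle\vec\varphi\preceq\vec t\rangle=\{P\in\mathcal M:\varphi_i(P)\le t_i,\ i=1,\dots,k\}$. Two points $P,Q\in\mathcal M$ are $\langle\vec\varphi\preceq\vec y\rangle$-connected if some connected subset of $\mathcal M\langle\vec\varphi\preceq\vec y\rangle$ contains both. The ($k$-dimensional) size function $\ell_{(\mathcal M,\vec\varphi)}:\{(\vec x,\vec y)\in\mathbb R^k\times\mathbb R^k:\vec x\prec\vec y\}\to\mathbb N$ assigns to $(\vec x,\vec y)$ the number of equivalence classes into which $\mathcal M\langle\vec\varphi\preceq\vec x\rangle$ is divided by the $\langle\vec\varphi\preceq\vec y\rangle$-connectedness relation. For $k=1$ this gives the classical size function $\ell_{(\mathcal M,\phi)}(s,t)$, $s<t$, of a continuous $\phi:\mathcal M\to\mathbb R$. *)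

(* Defs.v *)
From HB Require Import structures.
From mathcomp Require Import all_boot all_order all_algebra.
From mathcomp Require Import all_classical all_reals topology normedtype.
Import numFieldNormedType.Exports.
Set Implicit Arguments. Unset Strict Implicit. Unset Printing Implicit Defensive.
Import Order.TTheory GRing.Theory Num.Theory.
Local Open Scope classical_set_scope.
Local Open Scope ring_scope.

Definition locally_connected (M : topologicalType) : Prop :=
  forall (x : M) (U : set M), nbhs x U ->
    exists V : set M, [/\ open V, connected V, V x & V `<=` U].

Definition vle (R : realType) (k : nat) (x y : 'I_k -> R) : Prop :=
  forall i, x i <= y i.
Definition vlt (R : realType) (k : nat) (x y : 'I_k -> R) : Prop :=
  forall i, x i < y i.

Definition sublevel (M : topologicalType) (R : realType) (k : nat)
  (phi : M -> 'I_k -> R) (t : 'I_k -> R) : set M :=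
  [set P | vle (phi P) t].

Definition lconnected (M : topologicalType) (R : realType) (k : nat)
  (phi : M -> 'I_k -> R) (y : 'I_k -> R) (P Q : M) : Prop :=
  exists C : set M, [/\ connected C, C `<=` sublevel phi y, C P & C Q].

Definition size_classes (M : topologicalType) (R : realType) (k : nat)
  (phi : M -> 'I_k -> R) (x y : 'I_k -> R) : set (set M) :=
  [set C | exists2 P, sublevel phi x P &
     C = [set Q | sublevel phi x Q /\ lconnected phi y P Q]].

(* k-dimensional size function value at (x,y) (for x < y), as a cardinal:
   (size_fun phi x y #= `I_n) means l(x,y) = n. *)
Definition size_fun := size_classes.

Definition size_fun1 (M : topologicalType) (R : realType)
  (f : M -> R) (s t : R) : set (set M) :=
  @size_fun M R 1 (fun P _ => f P) (fun _ => s) (fun _ => t).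

Definition admissible (R : realType) (k : nat) (l b : 'I_k -> R) : Prop :=
  [/\ \sum_(i < k) l i ^+ 2 = 1, forall i, 0 < l i & \sum_(i < k) b i = 0].

Definition Fmax (M : Type) (R : realType) (k : nat)
  (phi : M -> 'I_k -> R) (l b : 'I_k -> R) (P : M) : R :=
  sup (range (fun i : 'I_k => (phi P i - b i) / l i)).

(* Main.v *)
Require Import Defs.
From HB Require Import structures.
From mathcomp Require Import all_boot all_order all_algebra.
From mathcomp Require Import all_classical all_reals topology normedtype.
Import numFieldNormedType.Exports.
Import Order.TTheory GRing.Theory Num.Theory.
Local Open Scope classical_set_scope.
Local Open Scope ring_scope.

Lemma range_ub (R : realType) (k : nat) (f : 'I_k -> R) :
  has_ubound (range f).
Proof.
exists (\sum_(i < k) `|f i|) => _ [j _ <-].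
rewrite (bigD1 j) //=.
apply: le_trans (ler_norm (f j)) _.
rewrite lerDl; apply: sumr_ge0 => i _; exact: normr_ge0.
Qed.

Lemma Fmax_le (R : realType) (k : nat) (f : 'I_k -> R) (s : R) :
  (0 < k)%N -> (sup (range f) <= s <-> forall i, f i <= s).
Proof.
move=> k0; split.
  move=> H i; apply: le_trans H; apply: ub_le_sup; first exact: range_ub.
  by exists i.
move=> H; apply: ge_sup; first by exists (f (Ordinal k0)), (Ordinal k0).
by move=> _ [j _ <-].
Qed.

Theorem theorem2p3 (R : realType) (M : topologicalType) (k : nat)
  (phi : M -> 'I_k -> R) (l b : 'I_k -> R) :
  [set: M] !=set0 -> compact [set: M] -> locally_connected M ->
  hausdorff_space M ->
  (forall i, continuous (fun P => phi P i)) ->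
  admissible l b ->
  forall s t : R, s < t ->
  (size_fun phi (fun i => s * l i + b i) (fun i => t * l i + b i)
    #= size_fun1 (Fmax phi l b) s t)%card.
Proof.
move=> _ _ _ _ _ [hl lpos _] s t _.
have k0 : (0 < k)%N.
  case: k phi l b hl lpos => // phi l b; rewrite big_ord0 => /eqP.
  by rewrite eq_sym oner_eq0.
have E : forall u : R, sublevel phi (fun i => u * l i + b i) =
    sublevel (fun P (_ : 'I_1) => Fmax phi l b P) (fun _ => u).
  move=> u; apply/seteqP; split => P /=; rewrite /sublevel /vle /=.
    move=> H _; rewrite /Fmax; apply/Fmax_le => // i.
    by rewrite ler_pdivrMr // lerBlDr.
  move=> H i; have /(@Fmax_le R k _ u k0) H2 := H ord0.
  by have := H2 i; rewrite ler_pdivrMr // lerBlDr.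
rewrite /size_fun1 /size_fun /size_classes /lconnected !E.
exact: card_eqxx.
Qed.
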